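(* There exists a $BH(19,6)$ matrix, i.e. a $19\times 19$ complex matrix $H$ all of whose entries are sixth roots of unity and which satisfies $HH^\ast=19I_{19}$.
   Context: $H^\ast$ denotes the conjugate transpose and $I_{19}$ the identity matrix of order $19$. *)

(* Defs.v *)
(* complex numbers are modelled by algC (algebraic complex numbers).
   No bespoke definitions needed: H^* is written (map_mx Num.conj H)^T. *)
From HB Require Import structures.
From mathcomp Require Import all_boot all_order all_algebra all_field.

(* Main.v *)
Require Import Defs.
From HB Require Import structures.
From mathcomp Require Import all_boot all_order all_algebra all_field.
From mathcomp Require Import ring.
Import GRing.Theory Num.Theory.
Local Open Scope ring_scope.

Definition tbl : seq (seq nat) := [::
  [:: 0; 0; 0; 0; 0; 0; 0; 0; 0; 0; 0; 0; 0; 0; 0; 0; 0; 0; 0];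
  [:: 0; 3; 5; 5; 3; 5; 1; 1; 1; 5; 3; 2; 3; 5; 3; 1; 1; 3; 5];
  [:: 0; 5; 3; 5; 5; 3; 5; 1; 1; 1; 5; 3; 2; 3; 5; 3; 1; 1; 3];
  [:: 0; 1; 5; 3; 5; 5; 3; 5; 1; 1; 3; 5; 3; 2; 3; 5; 3; 1; 1];
  [:: 0; 1; 1; 5; 3; 5; 5; 3; 5; 1; 1; 3; 5; 3; 2; 3; 5; 3; 1];
  [:: 0; 1; 1; 1; 5; 3; 5; 5; 3; 5; 1; 1; 3; 5; 3; 2; 3; 5; 3];
  [:: 0; 5; 1; 1; 1; 5; 3; 5; 5; 3; 3; 1; 1; 3; 5; 3; 2; 3; 5];
  [:: 0; 3; 5; 1; 1; 1; 5; 3; 5; 5; 5; 3; 1; 1; 3; 5; 3; 2; 3];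
  [:: 0; 5; 3; 5; 1; 1; 1; 5; 3; 5; 3; 5; 3; 1; 1; 3; 5; 3; 2];
  [:: 0; 5; 5; 3; 5; 1; 1; 1; 5; 3; 2; 3; 5; 3; 1; 1; 3; 5; 3];
  [:: 0; 5; 1; 3; 2; 3; 1; 5; 3; 3; 5; 3; 5; 5; 3; 5; 1; 1; 1];
  [:: 0; 3; 5; 1; 3; 2; 3; 1; 5; 3; 1; 5; 3; 5; 5; 3; 5; 1; 1];
  [:: 0; 3; 3; 5; 1; 3; 2; 3; 1; 5; 1; 1; 5; 3; 5; 5; 3; 5; 1];
  [:: 0; 5; 3; 3; 5; 1; 3; 2; 3; 1; 1; 1; 1; 5; 3; 5; 5; 3; 5];
  [:: 0; 1; 5; 3; 3; 5; 1; 3; 2; 3; 5; 1; 1; 1; 5; 3; 5; 5; 3];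
  [:: 0; 3; 1; 5; 3; 3; 5; 1; 3; 2; 3; 5; 1; 1; 1; 5; 3; 5; 5];
  [:: 0; 2; 3; 1; 5; 3; 3; 5; 1; 3; 5; 3; 5; 1; 1; 1; 5; 3; 5];
  [:: 0; 3; 2; 3; 1; 5; 3; 3; 5; 1; 5; 5; 3; 5; 1; 1; 1; 5; 3];
  [:: 0; 1; 3; 2; 3; 1; 5; 3; 3; 5; 3; 5; 5; 3; 5; 1; 1; 1; 5]].

Definition E (i j : nat) : nat := nth 0%N (nth [::] tbl i) j.

Definition fa (k : nat) : nat := match (k %% 6)%N with 0 => 1 | 5 => 1 | _ => 0 end.
Definition fb (k : nat) : nat := match (k %% 6)%N with 2 => 1 | 3 => 1 | _ => 0 end.
Definition fc (k : nat) : nat := match (k %% 6)%N with 1 => 1 | 2 => 1 | _ => 0 end.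
Definition fd (k : nat) : nat := match (k %% 6)%N with 4 => 1 | 5 => 1 | _ => 0 end.

Definition D (i k j : nat) : nat := (E i j + 5 * E k j)%N.
Definition natsum (f : nat -> nat) : nat := foldr (fun j a => f j + a)%N 0%N (iota 0 19).

Definition goodb (i k : nat) : bool :=
  let sa := natsum (fun j => fa (D i k j)) in
  let sb := natsum (fun j => fb (D i k j)) in
  let sc := natsum (fun j => fc (D i k j)) in
  let sd := natsum (fun j => fd (D i k j)) in
  if i == k then [&& sa == 19, sb == 0, sc == 0 & sd == 0]%N
  else (sa == sb) && (sc == sd).

Lemma chk : all (fun i => all (fun k => goodb i k) (iota 0 19)) (iota 0 19).
Proof. Time vm_compute. reflexivity. Qed.

Definition eps : algC := (1 + 'i * sqrtC 3) / 2.

Lemma eps2 : eps ^+ 2 = eps - 1.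
Proof.
have hi : 'i ^+ 2 = -1 :> algC by exact: sqrCi.
have hs : sqrtC 3 ^+ 2 = 3 :> algC by exact: sqrtCK.
rewrite /eps.
have -> : ((1 + 'i * sqrtC 3) / 2) ^+ 2 = (1 + 2 * 'i * sqrtC 3 + 'i ^+ 2 * sqrtC 3 ^+ 2) / 4 :> algC.
  by field; rewrite ?pnatr_eq0.
rewrite hi hs. field; rewrite ?pnatr_eq0 //.
Qed.

Lemma eps3 : eps ^+ 3 = -1.
Proof. by rewrite exprS eps2 mulrBr -expr2 eps2 mulr1 addrAC subrr sub0r. Qed.

Lemma eps6 : eps ^+ 6 = 1.
Proof. by rewrite (_ : 6 = 3 * 2)%N // exprM eps3 sqrrN expr1n. Qed.

Lemma epsk k : eps ^+ k =
  (fa k)%:R - (fb k)%:R + ((fc k)%:R - (fd k)%:R) * eps.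
Proof.
rewrite {1}(divn_eq k 6) exprD mulnC exprM eps6 expr1n mul1r.
rewrite /fa /fb /fc /fd.
have := ltn_pmod k (isT : (0 < 6)%N).
case: (k %% 6)%N => [|[|[|[|[|[|r]]]]]] //= _.
- by rewrite expr0; ring.
- by rewrite expr1; ring.
- by rewrite eps2; ring.
- by rewrite eps3; ring.
- by rewrite exprS eps3; ring.
- by rewrite (_ : 5 = 3 + 2)%N // exprD eps3 eps2; ring.
Qed.

Lemma conj_eps : eps^* = eps ^+ 5.
Proof.
rewrite epsk /fa /fb /fc /fd /=.
have hs : sqrtC (3 : algC) \is Num.real by apply: sqrtC_real; rewrite ler0n.
have h2 : (2 : algC)^-1 \is Num.real by rewrite rpredV realn.
have hs2 : sqrtC (3 : algC) / 2 \is Num.real by rewrite rpredM.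
have -> : eps = 2^-1 + 'i * (sqrtC 3 / 2).
  by rewrite /eps; field; rewrite ?pnatr_eq0.
rewrite conjC_rect //.
field; rewrite ?pnatr_eq0 //.
Qed.

Lemma conj_epsX k : (eps ^+ k)^* = eps ^+ (5 * k).
Proof.
transitivity ((eps^*) ^+ k); first exact: rmorphXn.
by rewrite conj_eps -exprM.
Qed.

Lemma sumE (f : nat -> nat) : \sum_(j < 19) (f j)%:R = (natsum f)%:R :> algC.
Proof.
rewrite -natr_sum; congr (_%:R).
rewrite -(big_mkord xpredT f) /index_iota subn0 /natsum.
by elim: (iota 0 19) => [|x s IH]; rewrite ?big_nil ?big_cons ?IH.
Qed.

Theorem theorem3 :
  exists H : 'M[algC]_19,
    (forall i j : 'I_19, 6.-unity_root (H i j)) /\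
    H *m (map_mx Num.conj H)^T = 19%:R%:M.
Proof.
exists (\matrix_(i, j) eps ^+ E i j); split.
  move=> i j; rewrite mxE; apply/unity_rootP.
  by rewrite -exprM mulnC exprM eps6 expr1n.
apply/matrixP => i k; rewrite !mxE.
transitivity (\sum_(j < 19) eps ^+ D i k j).
  by apply: eq_bigr => j _; rewrite !mxE conj_epsX -exprD.
under eq_bigr => j _ do rewrite epsk.
rewrite big_split /= -mulr_suml !sumrB (sumE (fun j => fa (D i k j))) (sumE (fun j => fb (D i k j))) (sumE (fun j => fc (D i k j))) (sumE (fun j => fd (D i k j))).
have /allP/(_ i) := chk; rewrite mem_iota ltn_ord => /(_ isT).
move=> /allP/(_ k); rewrite mem_iota ltn_ord => /(_ isT).
rewrite /goodb.
case: (eqVneq i k) => [<-|ne].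
  rewrite eqxx => /and4P[/eqP -> /eqP -> /eqP -> /eqP ->].
  by rewrite subrr mul0r addr0 subr0 mulr1n.
have -> : (nat_of_ord i == nat_of_ord k) = false by apply/negbTE.
case/andP=> [/eqP -> /eqP ->].
by rewrite !subrr mul0r addr0 ?(negbTE ne) mulr0n.
Qed.
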